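(* Let $\mathcal F$ be a proper filter on $\omega$ and consider the game $\mathfrak G(\mathcal F,\omega,\mathcal F^* )$. Then (1) player I has a winning strategy if and only if $\mathcal F$ is countably generated; (2) player II has a winning strategy if and only if $\mathcal F$ is not $+$-Ramsey.
   Context: A filter on $\omega$ is a family $\mathcal F\subseteq\mathcal P(\omega)$ closed under finite intersections and supersets and containing all cofinite sets; it is proper if all its members are infinite. $\mathcal F^+=\{X\subseteq\omega:\omega\setminus X\notin\mathcal F\}$ and $\mathcal F^*=\mathcal P(\omega)\setminus\mathcal F^+$. $\mathcal F$ is countably generated if there is a countable $\mathcal B\subseteq\mathcal F$ such that every member of $\mathcal F$ contains a member of $\mathcal B$. Game $\mathfrak G(\mathcal X,\omega,\mathcal Z)$: at each stage $k\in\omega$, player I chooses $X_k\in\mathcal X$ and player II responds with $n_k\in X_k$; II wins if $\{n_k:k\in\omega\}\in\mathcal Z$, otherwise I wins. A tree is a set $T$ of finite sequences of natural numbers containing the empty sequence and closed under initial segments; it is an $\mathcal F^+$-tree if for each $\bar s\in T$ there is $X_{\bar s}\in\mathcal F^+$ with $\bar s^\frown n\in T$ for all $n\in X_{\bar s}$; a branch (infinite sequence all of whose initial segments lie in $T$) is in $\mathcal F^+$ if its set of values is in $\mathcal F^+$. $\mathcal F$ is $+$-Ramsey if every $\mathcal F^+$-tree has a branch in $\mathcal F^+$. *)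

(* Defs.v *)
From Stdlib Require Import List Arith.
Import ListNotations.

Definition natset := nat -> Prop.
Definition family := natset -> Prop.

Definition subset (X Y : natset) : Prop := forall n, X n -> Y n.
Definition setI (X Y : natset) : natset := fun n => X n /\ Y n.
Definition setC (X : natset) : natset := fun n => ~ X n.
Definition cofinite (X : natset) : Prop := exists N, forall n, N <= n -> X n.
Definition infinite (X : natset) : Prop := forall N, exists n, N <= n /\ X n.

Definition is_filter (F : family) : Prop :=
  (forall X Y, F X -> F Y -> F (setI X Y)) /\
  (forall X Y, F X -> subset X Y -> F Y) /\
  (forall X, cofinite X -> F X).

Definition proper_filter (F : family) : Prop :=
  is_filter F /\ (forall X, F X -> infinite X).

Definition Fplus (F : family) : family := fun X => ~ F (setC X).
Definition Fstar (F : family) : family := fun X => ~ Fplus F X.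

Definition countably_generated (F : family) : Prop :=
  exists B : nat -> natset,
    (forall k, F (B k)) /\ (forall X, F X -> exists k, subset (B k) X).

Definition range (f : nat -> nat) : natset := fun m => exists k, f k = m.

Definition prefix {A : Type} (f : nat -> A) (k : nat) : list A :=
  map f (seq 0 k).

(* Game G(X, omega, Z): at stage k, I plays X_k in X, II answers n_k in X_k;
   II wins iff {n_k : k} in Z. *)

(* A strategy for I maps the finite sequence of II's previous moves to a move
   of I (I's own earlier moves are determined by the strategy). *)

Definition compatI (sigma : list nat -> natset) (n : nat -> nat) : Prop :=
  forall k, sigma (prefix n k) (n k).

Definition I_has_winning_strategy (Xfam Z : family) : Prop :=
  exists sigma : list nat -> natset,
    (forall s, Xfam (sigma s)) /\
    (forall n : nat -> nat, compatI sigma n -> ~ Z (range n)).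

(* A strategy for II maps the (nonempty) sequence of I's moves so far
   to a legal answer in I's last move. *)
Definition legal_II (Xfam : family) (tau : list natset -> nat) : Prop :=
  forall (l : list natset) (X : natset),
    (forall Y, In Y l -> Xfam Y) -> Xfam X -> X (tau (l ++ [X])).

Definition II_has_winning_strategy (Xfam Z : family) : Prop :=
  exists tau : list natset -> nat,
    legal_II Xfam tau /\
    (forall Xs : nat -> natset, (forall k, Xfam (Xs k)) ->
       Z (range (fun k => tau (prefix Xs (S k))))).

Definition is_tree (T : list nat -> Prop) : Prop :=
  T [] /\ (forall s t, T (s ++ t) -> T s).

Definition Fplus_tree (F : family) (T : list nat -> Prop) : Prop :=
  is_tree T /\
  (forall s, T s -> exists X, Fplus F X /\ (forall n, X n -> T (s ++ [n]))).

Definition branch (T : list nat -> Prop) (b : nat -> nat) : Prop :=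
  forall k, T (prefix b k).

Definition plus_Ramsey (F : family) : Prop :=
  forall T, Fplus_tree F T -> exists b, branch T b /\ Fplus F (range b).

(* Main.v *)
Require Import Defs.
From mathcomp Require ssreflect ssrfun ssrbool eqtype ssrnat seq choice.
Module Enc.
Import ssreflect ssrfun ssrbool eqtype ssrnat seq choice.
Definition dec (k : nat) : option (list nat) := @unpickle (seq nat) k.
Lemma decS (s : list nat) : exists k, dec k = Some s.
Proof. exists (pickle s). by rewrite /dec pickleK. Qed.
End Enc.
From Stdlib Require Import List Arith Lia Classical ClassicalEpsilon FunctionalExtensionality.
Import ListNotations.

Lemma prefix_S {A} (f : nat -> A) k : prefix f (S k) = prefix f k ++ [f k].
Proof. unfold prefix. rewrite seq_S, map_app. reflexivity. Qed.

Lemma prefix_len {A} (f : nat -> A) k : length (prefix f k) = k.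
Proof. unfold prefix. rewrite length_map, length_seq. reflexivity. Qed.

Lemma prefix_In {A} (f : nat -> A) k Y : In Y (prefix f k) -> exists i, Y = f i.
Proof. unfold prefix. intros H. apply in_map_iff in H. destruct H as [i [H _]]. eauto. Qed.

Lemma cofT (F : family) : is_filter F -> F (fun _ => True).
Proof. intros [_ [_ H]]. apply H. exists 0. auto. Qed.

Lemma part1a (F : family) : is_filter F ->
  countably_generated F -> I_has_winning_strategy F (Fstar F).
Proof.
  intros HF [B [HB HBg]].
  exists (fun s => B (length s)). split.
  - intros s. apply HB.
  - intros n Hc Hs. apply Hs. intros HC.
    destruct (HBg _ HC) as [j Hj].
    specialize (Hc j). cbv beta in Hc. rewrite prefix_len in Hc.
    apply (Hj _ Hc). exists j. reflexivity.
Qed.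

Lemma part1b (F : family) : is_filter F ->
  I_has_winning_strategy F (Fstar F) -> countably_generated F.
Proof.
  intros HF [sigma [Hs Hw]].
  apply NNPP. intros Hncg.
  set (B := fun k => match Enc.dec k with Some s => sigma s | None => fun _ => True end).
  assert (HBF : forall k, F (B k)).
  { intros k. unfold B. destruct (Enc.dec k); [apply Hs | apply cofT; auto]. }
  assert (HY : exists Y, F Y /\ forall k, ~ subset (B k) Y).
  { apply NNPP. intros H. apply Hncg. exists B. split; auto.
    intros X HX. apply NNPP. intros H2. apply H. exists X. split; auto.
    intros k Hk. apply H2. eauto. }
  destruct HY as [Y [HY HYn]].
  assert (Hc : forall s, exists n, sigma s n /\ ~ Y n).
  { intros s. destruct (Enc.decS s) as [k Hk].
    specialize (HYn k). unfold B in HYn. rewrite Hk in HYn.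
    apply NNPP. intros H. apply HYn. intros n Hn. apply NNPP. intros Hn2.
    apply H. eauto. }
  destruct (choice _ Hc) as [c Hcs].
  set (g := fix g k := match k with 0 => [] | S k => g k ++ [c (g k)] end).
  set (n := fun k => c (g k)).
  assert (Hpg : forall k, prefix n k = g k).
  { induction k. reflexivity. rewrite prefix_S, IHk. reflexivity. }
  apply (Hw n).
  - intros k. rewrite Hpg. apply Hcs.
  - intros Hp. apply Hp. destruct HF as [_ [Hsup _]].
    apply (Hsup Y); auto. intros m Hm [k Hk]. subst m. apply (Hcs (g k)). exact Hm.
Qed.

Lemma part2a (F : family) : is_filter F ->
  ~ plus_Ramsey F -> II_has_winning_strategy F (Fstar F).
Proof.
  intros HF HnR. unfold plus_Ramsey in HnR.
  apply not_all_ex_not in HnR. destruct HnR as [T HT].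
  apply imply_to_and in HT. destruct HT as [HT Hnb].
  assert (Hb : forall b, branch T b -> ~ Fplus F (range b)).
  { intros b Hb Hp. apply Hnb. eauto. }
  destruct HT as [[HT0 HTc] HTx].
  assert (Hch : forall p : list nat * natset, exists n,
     T (fst p) -> F (snd p) -> snd p n /\ T (fst p ++ [n])).
  { intros [s X]. simpl. destruct (classic (T s /\ F X)) as [[Ts FX] | Hno].
    - destruct (HTx s Ts) as [Xs [HXs Hch]].
      apply NNPP. intros H. apply HXs.
      destruct HF as [_ [Hsup _]]. apply (Hsup X); auto.
      intros m Hm Hm2. apply H. exists m. intros _ _. auto.
    - exists 0. intros a b. exfalso. auto. }
  destruct (choice _ Hch) as [ch0 Hch0].
  set (ch := fun s X => ch0 (s, X)).
  set (node := fun l : list natset => fold_left (fun s X => s ++ [ch s X]) l []).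
  assert (Hsnoc : forall l X, node (l ++ [X]) = node l ++ [ch (node l) X]).
  { intros l X. unfold node. rewrite fold_left_app. reflexivity. }
  set (tau := fun l => last (node l) 0).
  assert (Htau : forall l X, tau (l ++ [X]) = ch (node l) X).
  { intros l X. unfold tau. rewrite Hsnoc, last_last. reflexivity. }
  assert (HnT : forall l, (forall Y, In Y l -> F Y) -> T (node l)).
  { induction l using rev_ind; intros Hl.
    - exact HT0.
    - rewrite Hsnoc. apply (Hch0 (node l, x)); simpl.
      + apply IHl. intros Y HY. apply Hl. apply in_or_app. auto.
      + apply Hl. apply in_or_app. right. left. auto. }
  exists tau. split.
  - intros l X Hl HX. rewrite Htau. apply (Hch0 (node l, X)); simpl; auto.
  - intros Xs HXs.
    set (b := fun k => tau (prefix Xs (S k))).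
    assert (Hpb : forall k, prefix b k = node (prefix Xs k)).
    { induction k. reflexivity.
      rewrite prefix_S, IHk, (prefix_S Xs k), Hsnoc. unfold b.
      rewrite prefix_S, Htau. reflexivity. }
    apply (Hb b). intros k. rewrite Hpb. apply HnT.
    intros Y HY. destruct (prefix_In _ _ _ HY) as [i ->]. apply HXs.
Qed.

Lemma part2b (F : family) : is_filter F ->
  II_has_winning_strategy F (Fstar F) -> ~ plus_Ramsey F.
Proof.
  intros HF [tau [Hleg Hwin]] HR.
  set (ok := fun l n => exists X, F X /\ tau (l ++ [X]) = n).
  assert (Hp : forall p : list natset * nat, exists X,
     F X /\ (ok (fst p) (snd p) -> tau (fst p ++ [X]) = snd p)).
  { intros [l n]; simpl. destruct (classic (ok l n)) as [[X [HX HXe]] | Hno].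
    - exists X. auto.
    - exists (fun _ => True). split. apply cofT; auto. intros H; contradiction. }
  destruct (choice _ Hp) as [pick0 Hpick0].
  set (pick := fun l n => pick0 (l, n)).
  set (w := fun s : list nat => fold_left (fun l n => l ++ [pick l n]) s []).
  assert (Hwsnoc : forall s n, w (s ++ [n]) = w s ++ [pick (w s) n]).
  { intros s n. unfold w. rewrite fold_left_app. reflexivity. }
  assert (HwF : forall s Y, In Y (w s) -> F Y).
  { induction s using rev_ind; intros Y HY.
    - contradiction.
    - rewrite Hwsnoc in HY. apply in_app_or in HY. destruct HY as [HY | [HY | []]].
      + auto.
      + subst Y. apply (Hpick0 (w s, x)). }
  set (T := fun s : list nat => forall k, k < length s -> ok (w (firstn k s)) (nth k s 0)).
  assert (Hfa : forall (s t : list nat) k, k <= length s -> firstn k (s ++ t) = firstn k s).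
  { intros s t k Hk. rewrite firstn_app. replace (k - length s) with 0 by lia.
    simpl. apply app_nil_r. }
  assert (Hpre : forall s t, T (s ++ t) -> T s).
  { intros s t H k Hk. specialize (H k). rewrite Hfa, app_nth1 in H by lia.
    apply H. rewrite length_app. lia. }
  assert (Hlast : forall s n, T (s ++ [n]) -> ok (w s) n).
  { intros s n H. specialize (H (length s)). rewrite Hfa, firstn_all, nth_middle in H by lia.
    apply H. rewrite length_app. simpl. lia. }
  assert (Hext : forall s n, T s -> ok (w s) n -> T (s ++ [n])).
  { intros s n Hs Hn k Hk. rewrite length_app in Hk. simpl in Hk.
    destruct (Nat.eq_dec k (length s)) as [-> | Hne].
    - rewrite Hfa, firstn_all, nth_middle by lia. exact Hn.
    - rewrite Hfa, app_nth1 by lia. apply Hs. lia. }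
  assert (HTt : Fplus_tree F T).
  { split; [split|].
    - intros k Hk. simpl in Hk. lia.
    - exact Hpre.
    - intros s Hs. exists (ok (w s)). split.
      + intros HC. pose proof (Hleg (w s) _ (HwF s) HC) as H. apply H.
        exists (setC (ok (w s))). split; auto.
      + intros n Hn. apply Hext; auto. }
  destruct (HR T HTt) as [b [Hbr Hpl]].
  set (Xs := fun k => pick (w (prefix b k)) (b k)).
  assert (Hwp : forall k, w (prefix b k) = prefix Xs k).
  { induction k. reflexivity. rewrite prefix_S, Hwsnoc, IHk, (prefix_S Xs). unfold Xs.
    rewrite IHk. reflexivity. }
  assert (HXF : forall k, F (Xs k)).
  { intros k. apply (Hpick0 (w (prefix b k), b k)). }
  assert (Heq : (fun k => tau (prefix Xs (S k))) = b).
  { apply functional_extensionality. intros k.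
    rewrite prefix_S, <- Hwp. unfold Xs.
    apply (Hpick0 (w (prefix b k), b k)). simpl.
    apply Hlast. rewrite <- prefix_S. apply Hbr. }
  pose proof (Hwin Xs HXF) as H. rewrite Heq in H. exact (H Hpl).
Qed.

Theorem theorem2p9 (F : family) :
  proper_filter F ->
  (I_has_winning_strategy F (Fstar F) <-> countably_generated F) /\
  (II_has_winning_strategy F (Fstar F) <-> ~ plus_Ramsey F).
Proof.
  intros [HF _]. split; split.
  - apply part1b; auto.
  - apply part1a; auto.
  - apply part2b; auto.
  - apply part2a; auto.
Qed.
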